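(* Let $m \geq 5$ be an odd integer. The digraph $H_{2m}$ admits a $\vec{C}_m$-factorization (in fact one consisting of four $\vec{C}_m$-factors).
   Context: $H_{2m} = \vec{X}(m,\{\pm 1\}) \wr \overline{K}_2$ is the digraph with vertex set $\{x_a, y_a : a \in \mathbb{Z}_m\}$ whose arcs are exactly $(u_a, v_b)$ for all $u, v \in \{x, y\}$ and all $a, b \in \mathbb{Z}_m$ with $b - a \equiv \pm 1 \pmod m$. (Here $\vec{X}(m,D)$ is the directed circulant on $\mathbb{Z}_m$ with arcs $(a,b)$ whenever $b-a \in D$ modulo $m$, $\overline{K}_2$ is the empty graph on two vertices $\{x,y\}$, and the wreath product $G \wr H$ has vertex set $V(G)\times V(H)$ with an arc from $(g_1,h_1)$ to $(g_2,h_2)$ iff $(g_1,g_2)\in A(G)$, or $g_1=g_2$ and $(h_1,h_2)\in A(H)$; we write $x_a=(a,x)$, $y_a=(a,y)$.) A $\vec{C}_m$-factor of a digraph is a spanning subdigraph that is a disjoint union of directed $m$-cycles; a $\vec{C}_m$-factorization is a partition of the arc set into $\vec{C}_m$-factors. *)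

(* Defs.v *)
From mathcomp Require Import all_boot.
Set Implicit Arguments. Unset Strict Implicit. Unset Printing Implicit Defensive.

(* Vertices of H_{2m}: pairs (a, u) with a : 'I_m (standing for Z_m) and
   u : bool, where false = x and true = y; so x_a = (a, false), y_a = (a, true). *)
Definition vert (m : nat) : finType := ('I_m * bool)%type.

Definition H_arc (m : nat) (p q : vert m) : bool :=
  ((p.1 + 1) %% m == q.1) || ((q.1 + 1) %% m == p.1).

Definition H_arcs (m : nat) : {set vert m * vert m} :=
  [set e | H_arc e.1 e.2].

(* A set F of arcs of a digraph on a finite vertex type V is a directed
   m-cycle factor (a spanning subdigraph that is a disjoint union of directed
   m-cycles) iff there is a successor map s : V -> V, injective (so every
   vertex has in- and out-degree 1 in F), whose arcs are exactly F, and every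
   vertex lies on an s-cycle of length exactly m. *)
Definition Cm_factor (V : finType) (m : nat) (F : {set V * V}) : Prop :=
  exists s : V -> V,
    [/\ injective s,
        F = [set e | s e.1 == e.2] &
        forall v : V, order s v = m].

Definition Cm_factorization (V : finType) (m k : nat) (A : {set V * V})
    (Fs : 'I_k -> {set V * V}) : Prop :=
  [/\ forall i, Cm_factor m (Fs i),
      forall i j, i != j -> [disjoint Fs i & Fs j] &
      \bigcup_(i < k) Fs i = A].

(* Main.v *)
Require Import Defs.
From mathcomp Require Import all_boot zify.
Set Implicit Arguments. Unset Strict Implicit. Unset Printing Implicit Defensive.

Definition o0 : 'I_4 := Ordinal (isT : 0 < 4).
Definition o1 : 'I_4 := Ordinal (isT : 1 < 4).
Definition o2 : 'I_4 := Ordinal (isT : 2 < 4).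
Definition o3 : 'I_4 := Ordinal (isT : 3 < 4).

Definition tab (c1 c2 c3 : bool) (i : 'I_4) : bool * bool :=
  match val i with
  | 0 => (~~ c2, if c2 then true else ~~ c3)
  | 1 => (~~ c1, if c2 then true else c1)
  | 2 => (c1 || c2, if c2 then false else ~~ c1 || c3)
  | _ => (false, false)
  end.

Lemma tab_ok (c1 c2 c3 : bool) : (c2 -> ~~ c1) -> (c3 -> c1) -> ~~ (c2 && c3) ->
  (forall u v, exists i, tab c1 c2 c3 i = (u, v)) /\ injective (tab c1 c2 c3).
Proof.
move=> H1 H2 H3; split.
  move=> u v; move: H1 H2 H3.
  case: c1; case: c2; case: c3; case: u; case: v => //= H1 H2 H3; (try by move: (H1 isT)); (try by move: (H2 isT)); (try by move: H3).
  
  all: try solve [(exists o0; reflexivity) | (exists o1; reflexivity)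
  | (exists o2; reflexivity) | (exists o3; reflexivity)].
move: H1 H2 H3.
case: c1; case: c2; case: c3 => //= H1 H2 H3; (try by move: (H1 isT)); (try by move: (H2 isT)); (try by move: H3).
all: move=> [[|[|[|[|i]]]] Hi] [[|[|[|[|j]]]] Hj] //= _; apply: val_inj => //=.
Qed.

Lemma iter_ordS m (a : 'I_m) k : val (iter k (@ordS m) a) = (a + k) %% m.
Proof.
elim: k => [|k IH] /=; first by rewrite addn0 modn_small.
by rewrite IH -addn1 modnDml addn1 addnS.
Qed.

Lemma iter_ordS_neq m (a : 'I_m) k : 0 < k < m -> iter k (@ordS m) a != a.
Proof.
move=> /andP[Hk1 Hk2]; apply/negP => /eqP /(congr1 val); rewrite iter_ordS /= => E.
have Ha := ltn_ord a.
case: (ltnP (a + k) m) => H.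
  by move: E; rewrite modn_small //; lia.
have E2 : a + k = (a + k - m) + m by lia.
by move: E; rewrite E2 modnDr modn_small; lia.
Qed.

Lemma iter_ordS_m m (a : 'I_m) : iter m (@ordS m) a = a.
Proof. by apply: val_inj; rewrite iter_ordS modnDr modn_small. Qed.

Lemma iter_pred_S m (a : 'I_m) k : iter k (@ordS m) (iter k (@ord_pred m) a) = a.
Proof.
elim: k a => [|k IH] a //.
by rewrite iterSr iterS ord_predK IH.
Qed.

Lemma order_eq (T : finType) (f : T -> T) x n : injective f -> 0 < n -> iter n f x = x ->
  (forall k, 0 < k < n -> iter k f x != x) -> order f x = n.
Proof.
move=> If Hn Hx Hk.
case: (ltngtP (order f x) n) => // H.
  by move: (Hk _ (introT andP (conj (order_gt0 f x) H))); rewrite iter_order // eqxx.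
have := findex_iter H; rewrite Hx findex0 => E; move: Hn; by rewrite -E.
Qed.

Definition fb (m : nat) (i : 'I_4) (a : nat) : bool :=
  match val i with
  | 0 => a.+1 < m
  | 1 => ~~ odd a
  | 2 => odd a || (a.+1 == m)
  | _ => false
  end.

Lemma lvl m (Hm : 5 <= m) (Ho : odd m) (a : 'I_m) :
  [/\ (a.+1 == m) -> ~~ odd a, (a.+2 == m) -> odd a, ~~ ((a.+1 == m) && (a.+2 == m)) &
   forall i, (fb m i a, fb m i (ordS a)) = tab (odd a) (a.+1 == m) (a.+2 == m) i].
Proof.
have Ha := ltn_ord a.
split.
- by move/eqP=> E; have : odd a.+1 by rewrite E.
- move/eqP=> E; have : odd a.+2 by rewrite E.
  by rewrite /= negbK.
- by apply/negP => /andP [/eqP E1 /eqP E2]; lia.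
case: (eqVneq a.+1 m) => E.
  have E0 : a.+1 %% m = 0 by rewrite E modnn.
  have E1 : (a.+2 == m) = false by apply/negbTE/eqP; lia.
  have E2 : (1 == m) = false by apply/negbTE/eqP; lia.
  have E3 : 1 < m by lia.
  by case=> [[|[|[|[|i]]]] Hi] //=; rewrite /fb /tab /= E0 ?E1 ?E2 ?E3 /= ?E ?eqxx ?ltnn ?orbT.
have H1 : a.+1 < m by rewrite ltn_neqAle E Ha.
have E0 : a.+1 %% m = a.+1 by rewrite modn_small.
have E1 : (a.+2 < m) = ~~ (a.+2 == m) by rewrite ltn_neqAle H1 andbT.
by case=> [[|[|[|[|i]]]] Hi] //=; rewrite /fb /tab /= E0 ?(negbTE E) ?E1 ?negbK ?orbF ?H1.
Qed.

Lemma lvl_surj m (Hm : 5 <= m) (Ho : odd m) (a : 'I_m) u v :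
  exists i, fb m i a = u /\ fb m i (ordS a) = v.
Proof.
case: (lvl Hm Ho a) => C1 C2 C3 T.
case: (tab_ok C1 C2 C3) => S _; case: (S u v) => i Hi.
by exists i; move: Hi; rewrite -T; case=> -> ->.
Qed.

Lemma lvl_inj m (Hm : 5 <= m) (Ho : odd m) (a : 'I_m) i j :
  fb m i a = fb m j a -> fb m i (ordS a) = fb m j (ordS a) -> i = j.
Proof.
case: (lvl Hm Ho a) => C1 C2 C3 T.
case: (tab_ok C1 C2 C3) => _ I E1 E2; apply: I.
by rewrite -!T E1 E2.
Qed.

Definition sc m (i : 'I_4) (p : vert m) : vert m :=
  if p.2 == fb m i p.1 then (ordS p.1, fb m i (ordS p.1))
  else (ord_pred p.1, ~~ fb m i (ord_pred p.1)).

Lemma ordS_pred_neq m (Hm : 5 <= m) (a : 'I_m) : ordS a != ord_pred a.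
Proof.
apply/eqP => E.
have : iter 2 (@ordS m) a != a by apply: iter_ordS_neq; lia.
by rewrite /= E ord_predK eqxx.
Qed.

Lemma sc_inj m (Hm : 5 <= m) i : injective (@sc m i).
Proof.
move=> [a u] [b v]; rewrite /sc /=.
case: (eqVneq u (fb m i a)) => Hu; case: (eqVneq v (fb m i b)) => Hv => H;
  have E1 := congr1 fst H; have E2 := congr1 snd H; move: E1 E2 => /= E1 E2.
- have E := ordS_inj E1; subst b; by rewrite Hu Hv.
- by move/(congr1 val): E1 => /= E1; move: E2; rewrite E1; case: (fb m i _).
- by move/(congr1 val): E1 => /= E1; move: E2; rewrite E1; case: (fb m i _).
- have E := ord_pred_inj E1; subst b.
  by move: Hu Hv; case: u; case: v; case: (fb m i a).
Qed.

Lemma iter_sc_f m i (a : 'I_m) k :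
  iter k (@sc m i) (a, fb m i a) = (iter k (@ordS m) a, fb m i (iter k (@ordS m) a)).
Proof.
elim: k => [|k IH] //; rewrite iterS IH /sc /= eqxx.
by [].
Qed.

Lemma iter_sc_b m i (a : 'I_m) k :
  iter k (@sc m i) (a, ~~ fb m i a) = (iter k (@ord_pred m) a, ~~ fb m i (iter k (@ord_pred m) a)).
Proof.
elim: k => [|k IH] //; rewrite iterS IH /sc /=.
by case: (fb m i _).
Qed.

Lemma sc_order m (Hm : 5 <= m) i (p : vert m) : order (@sc m i) p = m.
Proof.
have Hm0 : 0 < m by lia.
case: p => a u.
case: (eqVneq u (fb m i a)) => Hu.
  subst u; apply: order_eq => //; first exact: sc_inj.
    by rewrite iter_sc_f iter_ordS_m.
  move=> k Hk; rewrite iter_sc_f; apply/negP => /eqP [] /eqP.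
  by rewrite (negbTE (iter_ordS_neq a Hk)).
have Hu' : u = ~~ fb m i a by move: Hu; case: u; case: (fb m i a).
subst u; apply: order_eq => //; first exact: sc_inj.
  have E : iter m (@ord_pred m) a = a.
    by rewrite -{2}(iter_pred_S a m) iter_ordS_m.
  by rewrite iter_sc_b E.
move=> k Hk; rewrite iter_sc_b; apply/negP => /eqP [] E.
have := iter_ordS_neq a Hk.
by rewrite -{1}E iter_pred_S eqxx.
Qed.

Lemma sc_disj m (Hm : 5 <= m) (Ho : odd m) i j (p : vert m) :
  @sc m i p = @sc m j p -> i = j.
Proof.
case: p => a u; rewrite /sc.
case: ifP => /eqP Hi; case: ifP => /eqP Hj H.
- have E2 : fb m i (ordS a) = fb m j (ordS a) := congr1 snd H.
  apply: (lvl_inj Hm Ho (a := a)) => //; by rewrite -Hi -Hj.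
- have E1 : ordS a = ord_pred a := congr1 fst H.
  by move: (ordS_pred_neq Hm a); rewrite E1 eqxx.
- have E1 : ord_pred a = ordS a := congr1 fst H.
  by move: (ordS_pred_neq Hm a); rewrite E1 eqxx.
- have E2 : ~~ fb m i (ord_pred a) = ~~ fb m j (ord_pred a) := congr1 snd H.
  apply: (lvl_inj Hm Ho (a := ord_pred a)).
    by move: E2; case: (fb m i _); case: (fb m j _).
  rewrite ord_predK; clear H E2; move: Hi Hj; case: u; case: (fb m i a); case: (fb m j a) => //.
Qed.

Lemma sc_arc m (Hm : 5 <= m) i (p : vert m) : H_arc p (@sc m i p).
Proof.
case: p => a u; rewrite /sc /H_arc.
case: ifP => _.
  by apply/orP; left; rewrite /= addn1.
apply/orP; right.
have := congr1 val (ord_predK a); rewrite [in X in X -> _]/= => E.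
by rewrite addn1 E.
Qed.

Lemma arc_sc m (Hm : 5 <= m) (Ho : odd m) (p q : vert m) :
  H_arc p q -> exists i, @sc m i p = q.
Proof.
case: p => a u; case: q => b v; rewrite /H_arc /=.
case/orP => /eqP E.
  have Eb : ordS a = b by apply: val_inj; rewrite /= -E addn1.
  case: (lvl_surj Hm Ho a u v) => i [H1 H2].
  by exists i; rewrite /sc /= H1 eqxx Eb -Eb H2.
have Ea : ordS b = a by apply: val_inj; rewrite /= -E addn1.
case: (lvl_surj Hm Ho b (~~ v) (~~ u)) => i [H1 H2].
exists i; rewrite /sc /=.
have -> : (u == fb m i a) = false by rewrite -Ea H2; case: (u).
by rewrite -Ea -[(_ + m).-1 %% m]/(nat_of_ord (ord_pred (ordS b))) ordSK H1 negbK.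
Qed.

Theorem mainTheorem3 (m : nat) :
  5 <= m -> odd m ->
  exists Fs : 'I_4 -> {set vert m * vert m},
    Cm_factorization m (H_arcs m) Fs.
Proof.
move=> Hm Ho.
exists (fun i => [set e | @sc m i e.1 == e.2]); split.
- move=> i; exists (@sc m i); split => //; [exact: sc_inj | exact: sc_order].
- move=> i j Hij; rewrite disjoint_subset; apply/subsetP => e.
  rewrite !inE => /eqP Ei; apply/negP => /eqP Ej.
  by move: Hij; rewrite (sc_disj Hm Ho (etrans Ei (esym Ej))) eqxx.
- apply/setP => e; rewrite [RHS]inE; apply/bigcupP/idP.
    by case=> i _; rewrite inE => /eqP <-; exact: sc_arc.
  case/(arc_sc Hm Ho) => i Hi; exists i => //; by rewrite inE Hi.
Qed.
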